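(* Let $\mathcal{H}$ and $\mathcal{K}$ be real or complex Hilbert spaces and let $U:\mathcal{H}\to\mathcal{K}$ be a (not necessarily everywhere defined) linear operator. The following are equivalent: (i) $U$ is a unitary operator; (ii) $\ker U=\{0\}$, every non-zero real number $t$ is in the resolvent set of $M_{U,U^{-1}}$, and $\|R_{U,U^{-1}}(t)\|\le 1/|t|$ for all real $t\neq 0$.
   Context: When $\ker U=\{0\}$, $U^{-1}:\mathcal{K}\to\mathcal{H}$ is the inverse operator with domain $\operatorname{ran} U$. $M_{U,U^{-1}}$ is the operator on $\mathcal{H}\times\mathcal{K}$ with domain $\operatorname{dom} U\times\operatorname{ran} U$ defined by $M_{U,U^{-1}}(h,k)=(-U^{-1}k,Uh)$. A scalar $\lambda$ is in its resolvent set if $M_{U,U^{-1}}-\lambda I$ is injective with everywhere defined bounded inverse on $\mathcal{H}\times\mathcal{K}$, and then $R_{U,U^{-1}}(\lambda):=(M_{U,U^{-1}}-\lambda I)^{-1}$. A unitary operator is an everywhere defined bounded bijection $U:\mathcal{H}\to\mathcal{K}$ with $U^*=U^{-1}$. *)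

(* Defs.v *)
From HB Require Import structures.
From mathcomp Require Import all_boot all_order all_algebra.
From mathcomp Require Import complex.
From mathcomp Require Import reals.

Set Implicit Arguments.
Unset Strict Implicit.
Unset Printing Implicit Defensive.

Import Order.TTheory GRing.Theory Num.Theory.
Local Open Scope ring_scope.

Definition scal (R : realType) (b : bool) : numFieldType :=
  if b then (R[i] : numFieldType) else (R : numFieldType).

Definition sconj (R : realType) (b : bool) : scal R b -> scal R b :=
  match b return scal R b -> scal R b with
  | true => fun z : R[i] => (z^*)%C
  | false => fun x : R => x
  end.

Definition is_hilbert (K : numFieldType) (cj : K -> K) (V : lmodType K)
    (ip : V -> V -> K) : Prop :=
  [/\ (forall (a : K) (x y z : V), ip (a *: x + y) z = a * ip x z + ip y z),
      (forall x y : V, ip x y = cj (ip y x)),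
      (forall x : V, 0 <= ip x x),
      (forall x : V, ip x x = 0 -> x = 0)
    & (forall u : nat -> V,
         (forall e : K, 0 < e -> exists N : nat, forall m n : nat,
             (N <= m)%N -> (N <= n)%N -> ip (u m - u n) (u m - u n) < e) ->
         exists x : V, forall e : K, 0 < e -> exists N : nat, forall n : nat,
             (N <= n)%N -> ip (u n - x) (u n - x) < e)].

Section Ops.
Variables (K : numFieldType) (H G : lmodType K).
Variables (ipH : H -> H -> K) (ipG : G -> G -> K).

Definition ip_prod (v w : H * G) : K := ipH v.1 w.1 + ipG v.2 w.2.

Definition subspace (D : H -> Prop) : Prop :=
  D 0 /\ forall (a : K) x y, D x -> D y -> D (a *: x + y).

(* U : H -> G is a linear operator with domain D (values off D irrelevant). *)
Definition linear_on (D : H -> Prop) (U : H -> G) : Prop :=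
  subspace D /\ forall (a : K) x y, D x -> D y -> U (a *: x + y) = a *: U x + U y.

Definition bounded_linear (T : H -> G) : Prop :=
  (forall (a : K) x y, T (a *: x + y) = a *: T x + T y) /\
  exists C : K, forall x, ipG (T x) (T x) <= C * ipH x x.

Definition is_adjoint (T : H -> G) (V : G -> H) : Prop :=
  forall h k, ipG (T h) k = ipH h (V k).

Definition unitary (D : H -> Prop) (U : H -> G) : Prop :=
  (forall h, D h) /\ bounded_linear U /\
  exists V : G -> H, [/\ cancel U V, cancel V U & is_adjoint U V].

Definition trivial_kernel (D : H -> Prop) (U : H -> G) : Prop :=
  forall h, D h -> U h = 0 -> h = 0.

(* Graph of M_{U,U^{-1}} on H x G: domain dom U x ran U,
   M (h, k) = (- U^{-1} k, U h), where U^{-1} k = g for k = U g, g in dom U. *)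
Definition M_graph (D : H -> Prop) (U : H -> G) (w z : H * G) : Prop :=
  D w.1 /\ exists g, [/\ D g, w.2 = U g & z = (- g, U w.1)].

End Ops.

Section Res.
Variables (K : numFieldType) (H G : lmodType K).
Variables (ipH : H -> H -> K) (ipG : G -> G -> K).

(* R is the resolvent (M_{U,U^{-1}} - lam I)^{-1}: R is an everywhere defined
   bounded linear operator on H x G whose graph is the inverse of the graph
   of M_{U,U^{-1}} - lam I (so M - lam I is injective, and its inverse is
   everywhere defined and equal to R). *)
Definition is_resolvent (D : H -> Prop) (U : H -> G) (lam : K)
    (R : H * G -> H * G) : Prop :=
  @bounded_linear K (H * G)%type (H * G)%type
     (ip_prod ipH ipG) (ip_prod ipH ipG) R /\
  forall w v : H * G,
    (exists z, M_graph D U w z /\ v = (z.1 - lam *: w.1, z.2 - lam *: w.2))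
    <-> w = R v.

Definition in_resolvent (D : H -> Prop) (U : H -> G) (lam : K) : Prop :=
  exists R, is_resolvent D U lam R.

End Res.

(* Main.v *)
Require Import Defs.
From HB Require Import structures.
From mathcomp Require Import all_boot all_order all_algebra.
From mathcomp Require Import complex reals ring.
From Stdlib Require Import IndefiniteDescription.
Import Order.TTheory GRing.Theory Num.Theory.
Local Open Scope ring_scope.
Set Implicit Arguments.
Unset Strict Implicit.

Section IP.
Variables (K : numFieldType) (cj : K -> K).
Hypothesis cjD : forall x y, cj (x + y) = cj x + cj y.
Hypothesis cjM : forall x y, cj (x * y) = cj x * cj y.
Hypothesis cjR : forall x, x \is Num.real -> cj x = x.
Variables (V : lmodType K) (ip : V -> V -> K).
Hypothesis ipL : forall a x y z, ip (a *: x + y) z = a * ip x z + ip y z.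
Hypothesis ipS : forall x y, ip x y = cj (ip y x).
Hypothesis ipP : forall x, 0 <= ip x x.

Lemma ip0l z : ip 0 z = 0.
Proof.
have h := ipL 1 0 0 z; rewrite scale1r addr0 mul1r in h.
by apply: (@addrI _ (ip 0 z)); rewrite addr0 -h.
Qed.

Lemma ipZl a x z : ip (a *: x) z = a * ip x z.
Proof. by have := ipL a x 0 z; rewrite addr0 ip0l addr0. Qed.

Lemma ipDl x y z : ip (x + y) z = ip x z + ip y z.
Proof. by have := ipL 1 x y z; rewrite scale1r mul1r. Qed.

Lemma ipDr x y z : ip x (y + z) = ip x y + ip x z.
Proof. by rewrite ipS ipDl cjD -!ipS. Qed.

Lemma ipZr a x y : a \is Num.real -> ip x (a *: y) = a * ip x y.
Proof. by move=> ha; rewrite ipS ipZl cjM cjR // -ipS. Qed.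

Lemma ipNN x y : ip (- x) (- y) = ip x y.
Proof.
rewrite -!scaleN1r ipZl ipZr ?mulrA ?mulrNN ?mul1r //.
by rewrite rpredN rpred1.
Qed.

Lemma ipexp x y t : t \is Num.real ->
  ip (x + t *: y) (x + t *: y) = ip x x + t * (ip x y + ip y x) + t ^+ 2 * ip y y.
Proof.
move=> ht; rewrite !ipDl !ipDr !ipZl !ipZr //; ring.
Qed.

Lemma ip_real x : ip x x \is Num.real.
Proof. exact: ger0_real. Qed.

End IP.

Section E.
Variables (K : numFieldType) (W : lmodType K).
Lemma E1 (x y : W) t : x - t*:y + (-t)*:(-y - t*:x) = (1 + t^+2) *: x.
Proof.
rewrite scalerBr scaleNr !scalerN !opprK scalerA addrA subrK mulNr scaleNr opprK.
by rewrite -expr2 scalerDl scale1r.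
Qed.

Lemma E2 (x y : W) t : -x - t*:y + t*:(y - t*:x) = -((1+t^+2)*:x).
Proof.
rewrite scalerBr scalerA addrA subrK -expr2 scalerDl scale1r opprD.
by [].
Qed.

Lemma E3 (x y : W) t s : -((-s)*:(x + t*:y)) - t*:(s*:(y + (-t)*:x)) = (s*(1+t^+2)) *: x.
Proof.
rewrite scaleNr opprK !scalerDr !scalerA opprD addrA.
rewrite [t * s]mulrC addrK -scalerBl; congr (_ *: _); ring.

Qed.

Lemma E4 (x y : W) t s : s*:(x + (-t)*:y) - t*:((-s)*:(y + t*:x)) = (s*(1+t^+2))*:x.
Proof.
rewrite !scalerDr !scalerA opprD addrA.
have -> : t * - s = s * - t by ring.
rewrite addrK -scalerBl; congr (_ *: _); ring.

Qed.

End E.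

Lemma Lin1 (K : numFieldType) (W : lmodType K) (s a c : K) (X Y P Q : W) :
  s *: (a *: X + Y + c *: (a *: P + Q)) = a *: (s *: (X + c *: P)) + s *: (Y + c *: Q).
Proof.
rewrite !scalerDr !scalerA.
have -> : s * c * a = a * s * c by ring.
by rewrite [s * a]mulrC addrACA.
Qed.

Lemma cancel4 (K : numFieldType) (a b c d b' c' : K) :
  a + b + (c + d) = a + b' + (c' + d) -> b + c = b' + c'.
Proof.
move=> h; transitivity (a + b + (c + d) - a - d); first ring.
by rewrite h; ring.
Qed.

Lemma twice_inj (K : numFieldType) (x y : K) : x + x - (y + y) = 0 -> x = y.
Proof.
move=> h; apply/eqP; rewrite -subr_eq0.
have e : (x - y) *+ 2 = x + x - (y + y) by rewrite mulr2n; ring.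
by have := mulrn_eq0 (x - y) 2; rewrite e h eqxx /= => <-.
Qed.


Section Main.
Variables (K : numFieldType) (cj : K -> K).
Hypothesis cjD : forall x y, cj (x + y) = cj x + cj y.
Hypothesis cjM : forall x y, cj (x * y) = cj x * cj y.
Hypothesis cjR : forall x, x \is Num.real -> cj x = x.
Hypothesis cjP : forall p q : K,
  (forall a, a * p + cj (a * p) = a * q + cj (a * q)) -> p = q.
Variables (H G : lmodType K) (ipH : H -> H -> K) (ipG : G -> G -> K).
Hypothesis hH : is_hilbert cj ipH.
Hypothesis hG : is_hilbert cj ipG.

Let ipLH := let: And5 a _ _ _ _ := hH in a.
Let ipSH := let: And5 _ a _ _ _ := hH in a.
Let ipPH := let: And5 _ _ a _ _ := hH in a.
Let ipDH := let: And5 _ _ _ a _ := hH in a.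
Let ipLG := let: And5 a _ _ _ _ := hG in a.
Let ipSG := let: And5 _ a _ _ _ := hG in a.
Let ipPG := let: And5 _ _ a _ _ := hG in a.
Let ipDG := let: And5 _ _ _ a _ := hG in a.

Lemma keyid (U : H -> G) h g t : t \is Num.real ->
  ip_prod ipH ipG (- g - t *: h, U h - t *: U g) (- g - t *: h, U h - t *: U g)
  = t ^+ 2 * ip_prod ipH ipG (h, U g) (h, U g) + (ipH g g + ipG (U h) (U h))
    + t * ((ipH g h + ipH h g) - (ipG (U h) (U g) + ipG (U g) (U h))).
Proof.
move=> ht; rewrite /ip_prod /= -opprD (ipNN cjM cjR ipLH ipSH).
rewrite -scaleNr (ipexp cjD cjM cjR ipLH ipSH) // (ipexp cjD cjM cjR ipLG ipSG) ?rpredN //.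
ring.
Qed.


Lemma lin0 (D : H -> Prop) (U : H -> G) : linear_on D U -> U 0 = 0.
Proof.
case=> [[D0 _] hl]; have := hl 1 0 0 D0 D0; rewrite !scale1r addr0 => h.
by apply: (@addrI _ (U 0)); rewrite addr0 -h.
Qed.

Lemma tsq_gt0 (t : K) : t \is Num.real -> 0 < 1 + t ^+ 2.
Proof. by move=> tr; rewrite (lt_le_trans ltr01) // lerDl -realEsqr. Qed.

Lemma dir1 (D : H -> Prop) (U : H -> G) : linear_on D U -> unitary ipH ipG D U ->
  [/\ trivial_kernel D U,
      (forall t, t \is Num.real -> t != 0 -> in_resolvent ipH ipG D U t)
    & (forall t Rt, t \is Num.real -> t != 0 -> is_resolvent ipH ipG D U t Rt ->
         forall v, ip_prod ipH ipG (Rt v) (Rt v) <= t ^-2 * ip_prod ipH ipG v v)].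
Proof.
move=> hU [hall [[Ul _] [V [UV VU adj]]]].
have U0 := lin0 hU.
have iso h g : ipG (U h) (U g) = ipH h g by rewrite adj UV.
have UD x y : U (x + y) = U x + U y by have := Ul 1 x y; rewrite !scale1r.
have UZ a x : U (a *: x) = a *: U x by have := Ul a x 0; rewrite !addr0 U0 addr0.
have UN x : U (- x) = - U x by rewrite -scaleN1r UZ scaleN1r.
have VD x y : V (x + y) = V x + V y by apply: (can_inj UV); rewrite UD !VU.
have VZ a x : V (a *: x) = a *: V x by apply: (can_inj UV); rewrite UZ !VU.
have VN x : V (- x) = - V x by rewrite -scaleN1r VZ scaleN1r.
have bnd t w v : t \is Num.real -> t != 0 ->
   (exists z, M_graph D U w z /\ v = (z.1 - t *: w.1, z.2 - t *: w.2)) ->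
   ip_prod ipH ipG w w <= t ^-2 * ip_prod ipH ipG v v.
  move=> tr t0 [[z1 z2] [[_ [g [_ w2 zE]]] ->]].
  case: zE => -> ->.
  case: w w2 => h k /= ->.
  rewrite (keyid U h g tr) !iso [X in _ - X]addrC subrr mulr0 addr0.
  have t20 : t ^+ 2 != 0 by rewrite expf_neq0.
  rewrite mulrDr mulrA mulVf // mul1r lerDl mulr_ge0 //.
    by rewrite invr_ge0 -realEsqr.
  by rewrite addr_ge0.
split.
- move=> h _ Uh0; by rewrite -(UV h) Uh0 -U0 UV.
- move=> t tr t0.
  pose s := (1 + t ^+ 2)^-1.
  have s1 : s * (1 + t ^+ 2) = 1 by rewrite mulVf // gt_eqF // tsq_gt0.
  pose R (v : H * G) := (s *: (V v.2 + (-t) *: v.1), (-s) *: (U v.1 + t *: v.2)).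
  have Rres : forall w v, (exists z, M_graph D U w z /\ v = (z.1 - t *: w.1, z.2 - t *: w.2))
      <-> w = R v.
    move=> w v; split.
      move=> [[z1 z2] [[_ [g [_ w2 zE]]] ->]].
      case: zE => -> ->.
      case: w w2 => h k /= ->.
      rewrite /R /=; congr (_, _).
        by rewrite VD VN VZ !UV E1 scalerA s1 scale1r.
      by rewrite UD !UN UZ E2 scaleNr scalerN opprK scalerA s1 scale1r.
    move=> ->; exists (- V (R v).2, U (R v).1); split.
      by split; [exact: hall | exists (V (R v).2); split; rewrite ?VU].
    case: v => a c; rewrite /R /=; congr (_, _).
      by rewrite VZ VD VZ UV E3 s1 scale1r.
    by rewrite UZ UD UZ VU E4 s1 scale1r.
  exists R; split => //; split.
    move=> a [x1 x2] [y1 y2]; rewrite /R /=.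
    congr (_, _).
      by rewrite VD VZ Lin1.
    by rewrite UD UZ Lin1.
  exists (t ^-2) => v; apply: bnd => //; exact/Rres.
- move=> t Rt tr t0 [_ hR] v.
  by apply: bnd => //; apply/hR.
Qed.

Lemma dir2 (D : H -> Prop) (U : H -> G) : linear_on D U ->
  [/\ trivial_kernel D U,
      (forall t, t \is Num.real -> t != 0 -> in_resolvent ipH ipG D U t)
    & (forall t Rt, t \is Num.real -> t != 0 -> is_resolvent ipH ipG D U t Rt ->
         forall v, ip_prod ipH ipG (Rt v) (Rt v) <= t ^-2 * ip_prod ipH ipG v v)] ->
  unitary ipH ipG D U.
Proof.
move=> hU [hK hR hB].
case: (hU) => [[D0 DS] Ul].
have U0 := lin0 hU.
have DN x : D x -> D (- x).
  by move=> Dx; rewrite -scaleN1r -[_ *: x]addr0; apply: DS.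
have UN x : D x -> U (- x) = - U x.
  by move=> Dx; have := Ul (-1) x 0 Dx D0; rewrite !addr0 U0 addr0 !scaleN1r.
have r1 : (1 : K) \is Num.real by rewrite rpred1.
have n1 : (1 : K) != 0 by rewrite oner_eq0.
case: (hR 1 r1 n1) => R1 [_ hR1].
have sol v : exists h g, [/\ D h, D g & v = (- g - h, U h - U g)].
  have := proj2 (hR1 (R1 v) v) erefl.
  move=> [[z1 z2] [[Dh [g [Dg w2 zE]]] vE]].
  case: zE vE => -> -> ->.
  by exists (R1 v).1, g; split => //; rewrite !scale1r w2.
have hall : forall h, D h.
  move=> a; have [h [g [Dh Dg E]]] := sol (a, 0).
  case: E => ea e0.
  have hg : h = g.
    have Dd : D ((-1) *: g + h) := DS _ _ _ Dg Dh.
    have : U ((-1) *: g + h) = 0 by rewrite Ul // scaleN1r addrC -e0.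
    by move/(hK _ Dd)/eqP; rewrite scaleN1r addrC subr_eq0 => /eqP.
  have : D (1 *: g + g) := DS 1 g g Dg Dg.
  by rewrite scale1r => Dgg; rewrite ea hg -opprD; exact: DN.
have Ulin a x y : U (a *: x + y) = a *: U x + U y := Ul a x y (hall x) (hall y).
have UD x y : U (x + y) = U x + U y by have := Ulin 1 x y; rewrite !scale1r.
have UZ a x : U (a *: x) = a *: U x by have := Ulin a x 0; rewrite !addr0 U0 addr0.
have surj k : exists h, U h = k.
  have [h [g [Dh Dg E]]] := sol (0, k).
  case: E => e0 ek.
  have gE : g = - h.
    by apply/eqP; rewrite -(inj_eq (@oppr_inj _)) opprK -subr_eq0 -e0.
  by exists (h + h); rewrite ek gE (UN _ (hall h)) opprK UD.
have iso x : ipG (U x) (U x) = ipH x x.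
  set B := (ipH x x + ipH x x) - (ipG (U x) (U x) + ipG (U x) (U x)).
  set A := ipH x x + ipG (U x) (U x).
  have key t : t \is Num.real -> t != 0 -> 0 <= A + t * B.
    move=> tr t0; case: (hR t tr t0) => Rt hRt.
    have := hB t Rt tr t0 hRt (- x - t *: x, U x - t *: U x).
    have -> : Rt (- x - t *: x, U x - t *: U x) = (x, U x).
      symmetry; apply/(proj2 hRt); exists (- x, U x); split => //.
      by split => //; exists x; split.
    rewrite (keyid U x x tr) -/A -/B.
    have t20 : t ^+ 2 != 0 by rewrite expf_neq0.
    rewrite -addrA mulrDr mulrA mulVf // mul1r lerDl pmulr_rge0 //.
    by rewrite invr_gt0 lt_def t20 -realEsqr.
  have A0 : 0 <= A by rewrite addr_ge0.
  have Br : B \is Num.real.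
    by rewrite rpredB // rpredD // ger0_real.
  case: (eqVneq B 0) => [B0 | Bn0].
    by symmetry; apply: twice_inj.
  have A1 : 0 < A + 1 by rewrite (lt_le_trans ltr01) // lerDr.
  have tr : (- (A + 1) / B) \is Num.real.
    by apply: rpredM; [rewrite rpredN ger0_real // ltW | rewrite rpredV].
  have tn : (- (A + 1) / B) != 0.
    by rewrite mulf_neq0 ?invr_eq0 ?oppr_eq0 // gt_eqF.
  have := key _ tr tn.
  by rewrite divfK // opprD addrA subrr add0r oppr_ge0 (lt_geF ltr01).
have polar x y : ipG (U x) (U y) = ipH x y.
  apply: cjP => a.
  rewrite -(ipZl ipLG) -(ipZl ipLH) -UZ -ipSG -ipSH.
  have := iso (a *: x + y).
  rewrite UD !(ipDl ipLG) !(ipDr cjD ipLG ipSG) !(ipDl ipLH) !(ipDr cjD ipLH ipSH) !iso.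
  exact: cancel4.
have Uinj x y : U x = U y -> x = y.
  move=> e; apply/eqP; rewrite -subr_eq0; apply/eqP/hK => //.
  by rewrite UD (UN _ (hall y)) e subrr.
pose V k := proj1_sig (constructive_indefinite_description _ (surj k)).
have VU : cancel V U by move=> k; exact: (proj2_sig (constructive_indefinite_description _ (surj k))).
split => //; split; first by split => //; exists 1 => x; rewrite iso mul1r.
exists V; split => //.
  by move=> h; apply: Uinj; rewrite VU.
by move=> h k; rewrite -{1}(VU k) polar.
Qed.

End Main.


Lemma conj_iM (R : rcfType) (p : R[i]) : (('i%C * p)^*)%C = - 'i%C * (p^*)%C.
Proof. by case: p => a c; simpc. Qed.

Lemma cjP_C (R : rcfType) (p q : R[i]) :
  (forall a, a * p + ((a * p)^*)%C = a * q + ((a * q)^*)%C) -> p = q.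
Proof.
move=> h; have h1 := h 1; have hi := h 'i%C.
rewrite !mul1r in h1; rewrite !conj_iM in hi.
have e : p - (p^*)%C = q - (q^*)%C.
  apply: (@mulfI _ 'i%C).
    by apply/eqP => -[] /eqP; rewrite oner_eq0.
  rewrite /=; transitivity ('i%C * p + (- 'i%C) * (p^*)%C); first ring.
  by rewrite hi; ring.
apply: twice_inj.
transitivity ((p + (p^*)%C - (q + (q^*)%C)) + (p - (p^*)%C - (q - (q^*)%C))); first ring.
by rewrite h1 e !subrr addr0.
Qed.

Lemma sconj_props (R : realType) (b : bool) :
  [/\ (forall x y : scal R b, sconj (x + y) = sconj x + sconj y),
      (forall x y : scal R b, sconj (x * y) = sconj x * sconj y),
      (forall x : scal R b, x \is Num.real -> sconj x = x)
    & (forall p q : scal R b,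
        (forall a, a * p + sconj (a * p) = a * q + sconj (a * q)) -> p = q)].
Proof.
case: b; split.
- exact: rmorphD.
- exact: rmorphM.
- by move=> x /complex_realP [k ->]; exact: conjc_real.
- exact: cjP_C.
- by [].
- by [].
- by [].
- move=> p q h; apply: twice_inj; have := h 1; rewrite /= !mul1r => ->.
  by rewrite subrr.
Qed.

Unset Implicit Arguments.
Set Strict Implicit.

Theorem corollary4p4 (R : realType) (b : bool)
    (H G : lmodType (scal R b))
    (ipH : H -> H -> scal R b) (ipG : G -> G -> scal R b)
    (hH : is_hilbert (@sconj R b) ipH) (hG : is_hilbert (@sconj R b) ipG)
    (D : H -> Prop) (U : H -> G) (hU : linear_on D U) :
  unitary ipH ipG D U <->
  [/\ trivial_kernel D U,
      (forall t : scal R b, t \is Num.real -> t != 0 -> in_resolvent ipH ipG D U t)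
    & (forall (t : scal R b) (Rt : H * G -> H * G),
         t \is Num.real -> t != 0 -> is_resolvent ipH ipG D U t Rt ->
         forall v : H * G,
           ip_prod ipH ipG (Rt v) (Rt v) <= t ^-2 * ip_prod ipH ipG v v)].
Proof.
have [cjD cjM cjR cjP] := sconj_props R b.
split.
  by apply: dir1.
by apply: dir2.
Qed.
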